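(* Let $H_1,H_2$ be separable Hilbert spaces, $K\in B(H_1)$, $L\in B(H_2)$. Let $\{x_n\}_{n\geqslant1}$ be a $K$-frame for $H_1$ and $\{y_n\}_{n\geqslant1}$ an $L$-frame for $H_2$, with synthesis operators $T_1$ and $T_2$ respectively. If $\{x_n\oplus y_n\}_{n\geqslant1}$ is a $K\oplus L$-frame for $H_1\oplus H_2$, then $R(K)\subset T_1(N(T_2))$ and $R(L)\subset T_2(N(T_1))$.
   Context: $H_1\oplus H_2$ is the Hilbert space of pairs $x\oplus y$ with inner product $\langle x\oplus y,a\oplus b\rangle=\langle x,a\rangle+\langle y,b\rangle$; $(K\oplus L)(x\oplus y)=K(x)\oplus L(y)$. For a Hilbert space $H$ and $K\in B(H)$, $\{z_n\}_{n\geqslant1}$ is a $K$-frame if there are $A,B>0$ with $A\|K^*z\|^2\leq\sum_n|\langle z,z_n\rangle|^2\leq B\|z\|^2$ for all $z\in H$. Its synthesis operator is $T:\ell^2\to H$, $T(\{a_n\})=\sum_na_nz_n$. $R(\cdot)$ and $N(\cdot)$ denote range and kernel. *)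

(* Defs.v *)
From HB Require Import structures.
From mathcomp Require Import all_boot all_order all_algebra.
From mathcomp Require Import all_classical all_reals.
From mathcomp Require Import ereal topology normedtype sequences.
From mathcomp Require Import complex.
Set Implicit Arguments. Unset Strict Implicit. Unset Printing Implicit Defensive.
Import Order.TTheory GRing.Theory Num.Theory.
Local Open Scope ring_scope.

Section Hilbert.
Variable R : realType.
Local Notation C := (R[i]).

Definition sqmod (c : C) : R := complex.Re c ^+ 2 + complex.Im c ^+ 2.

Variable V : lmodType C.
Variable ip : V -> V -> C.   (* <x, y>, linear in x, conjugate-linear in y *)

Definition nsq (x : V) : R := complex.Re (ip x x).

Definition is_inner_product : Prop :=
  [/\ (forall a x y z, ip (a *: x + y) z = a * ip x z + ip y z),
      (forall x y, ip y x = conjc (ip x y)),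
      (forall x, 0 <= complex.Re (ip x x)) &
      (forall x, ip x x = 0 -> x = 0)].

Definition complete_ip : Prop :=
  forall u : nat -> V,
    (forall e : R, 0 < e -> exists N, forall m n, (N <= m)%N -> (N <= n)%N ->
         nsq (u m - u n) < e) ->
    exists l : V, forall e : R, 0 < e -> exists N, forall m, (N <= m)%N ->
         nsq (l - u m) < e.

Definition is_hilbert : Prop := is_inner_product /\ complete_ip.

Definition separable : Prop :=
  exists d : nat -> V, forall x (e : R), 0 < e -> exists n, nsq (x - d n) < e.

Definition bounded_op (K : V -> V) : Prop :=
  (forall a x y, K (a *: x + y) = a *: K x + K y) /\
  exists M : R, forall x, nsq (K x) <= M * nsq x.

Definition is_adjoint (K Ks : V -> V) : Prop :=
  forall x y, ip (K x) y = ip x (Ks y).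

Definition frame_sum (z : V) (zs : nat -> V) : \bar R :=
  (\sum_(n <oo) (sqmod (ip z (zs n)))%:E)%E.

Definition is_Kframe (K : V -> V) (zs : nat -> V) : Prop :=
  exists Ks, is_adjoint K Ks /\
  exists A B : R, 0 < A /\ 0 < B /\
    forall z, ((A * nsq (Ks z))%:E <= frame_sum z zs)%E /\
              (frame_sum z zs <= (B * nsq z)%:E)%E.

(* synthesis operator T({a_n}) = sum_n a_n z_n, as a relation:
   synth zs a h  <->  the series sum_n a_n z_n converges in H to h *)
Definition synth (zs : nat -> V) (a : nat -> C) (h : V) : Prop :=
  forall e : R, 0 < e -> exists N, forall m, (N <= m)%N ->
    nsq (h - \sum_(n < m) a n *: zs n) < e.

End Hilbert.

Definition in_l2 (R : realType) (a : nat -> R[i]) : Prop :=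
  (\sum_(n <oo) (sqmod (a n))%:E < +oo)%E.

Definition ip_sum (R : realType) (V1 V2 : lmodType R[i])
  (ip1 : V1 -> V1 -> R[i]) (ip2 : V2 -> V2 -> R[i]) :
  (V1 * V2)%type -> (V1 * V2)%type -> R[i] :=
  fun p q => ip1 p.1 q.1 + ip2 p.2 q.2.

Definition op_sum (V1 V2 : Type) (K : V1 -> V1) (L : V2 -> V2) :
  (V1 * V2)%type -> (V1 * V2)%type := fun p => (K p.1, L p.2).

Definition seq_sum (V1 V2 : Type) (x : nat -> V1) (y : nat -> V2) :
  nat -> (V1 * V2)%type := fun n => (x n, y n).

(* Main.v *)
Require Import Defs.
From HB Require Import structures.
From mathcomp Require Import all_boot all_order all_algebra.
From mathcomp Require Import all_classical all_reals.
From mathcomp Require Import ereal topology normedtype sequences.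
From mathcomp Require Import complex.
From mathcomp Require Import ring lra.
Import Order.TTheory GRing.Theory Num.Theory.
Import numFieldNormedType.Exports.
Set Implicit Arguments. Unset Strict Implicit. Unset Printing Implicit Defensive.
Local Open Scope classical_set_scope.
Local Open Scope ring_scope.

Section Basics.
Variable R : realType.

Definition rp (p q : R[i]) : R := complex.Re p * complex.Re q + complex.Im p * complex.Im q.
Definition sqm (c : R[i]) : R := complex.Re c ^+ 2 + complex.Im c ^+ 2.

Lemma ReM_real (t : R) (c : R[i]) : complex.Re ((t%:C)%C * c) = t * complex.Re c.
Proof. by case: c => a b /=; simpc. Qed.

Lemma sqm_lin (t : R) (p q : R[i]) :
  sqm ((t%:C)%C * p + q) = t ^+ 2 * sqm p + 2 * t * rp p q + sqm q.
Proof. case: p => a b; case: q => c d; rewrite /sqm /rp /=; simpc => /=; ring. Qed.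

Lemma sqm_ge0 c : 0 <= sqm c.
Proof. by rewrite /sqm addr_ge0 // sqr_ge0. Qed.

Lemma sqm_add2 p q : sqm (p + q) <= 2 * sqm p + 2 * sqm q.
Proof. case: p => a b; case: q => c d; rewrite /sqm /=; simpc => /=; have := sqr_ge0 (a - c); have := sqr_ge0 (b - d); nra. Qed.

Lemma rp_bound (s : R) p q : 0 < s -> 2 * `|rp p q| <= s * sqm p + sqm q / s.
Proof.
move=> s0; case: p => a b; case: q => c d; rewrite /sqm /rp /=.
have key : 2 * s * `|a * c + b * d| <= s * (s * (a^+2 + b^+2)) + (c^+2 + d^+2).
  have h1 := sqr_ge0 (s * a - c); have h2 := sqr_ge0 (s * b - d).
  have h3 := sqr_ge0 (s * a + c); have h4 := sqr_ge0 (s * b + d).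
  case: (lerP 0 (a * c + b * d)) => h.
    rewrite ger0_norm //; nra.
  rewrite ltr0_norm //; nra.
rewrite -(@ler_pM2l _ s) // mulrDr.
have -> : s * ((c^+2 + d^+2) / s) = c^+2 + d^+2 by field; rewrite gt_eqF.
by rewrite mulrA (mulrC s 2).
Qed.

Lemma rp_sym p q : rp p q = rp q p.
Proof. by rewrite /rp mulrC (mulrC (complex.Im p)). Qed.

Lemma rp_ReJ p q : complex.Re (p * conjc q) = rp p q.
Proof. case: p => a b; case: q => c d; rewrite /rp /=; simpc => /=; ring. Qed.

Lemma sqm_sqmod c : sqm c = sqmod c.
Proof. by []. Qed.


Lemma ser_ge (u : nat -> R) N : (forall n, 0 <= u n) ->
  ((\sum_(n < N) u n)%:E <= \sum_(n <oo) (u n)%:E)%E.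
Proof.
move=> u0.
rewrite -sumEFin -(big_mkord xpredT (fun n => (u n)%:E)).
apply: nneseries_lim_ge => n _ _; rewrite lee_fin; exact: u0.
Qed.

Lemma ser_le (u : nat -> R) c : (forall n, 0 <= u n) ->
  (forall N, \sum_(n < N) u n <= c) -> (\sum_(n <oo) (u n)%:E <= c%:E)%E.
Proof.
move=> u0 Hc.
apply: lime_le.
  apply: is_cvg_nneseries => n _ _; rewrite lee_fin; exact: u0.
near=> N.
rewrite big_mkord sumEFin lee_fin; exact: Hc.
Unshelve. all: by end_near. Qed.

Lemma real_cauchy2 (u : nat -> R) :
  (forall e : R, 0 < e -> exists N, forall i j, (N <= i)%N -> (N <= j)%N -> (u i - u j) ^+ 2 < e) ->
  cvgn u.
Proof.
move=> Hc.
apply/(@cauchy_cvgP R^o)/cauchy_exP => e e0.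
have [N HN] := Hc (e ^+ 2) (exprn_gt0 2 e0).
exists (u N); exists N => // n /= Nn.
rewrite /ball /=.
have := HN N n (leqnn N) Nn.
move=> h; apply/ltr_normlP; split; nra.
Qed.

Lemma sum_split (f : nat -> R) m N : (m <= N)%N ->
  \sum_(i < N) f i = \sum_(i < m) f i + \sum_(m <= i < N) f i.
Proof.
move=> mN; rewrite -!(big_mkord xpredT f).
by rewrite (big_cat_nat (leq0n m) mN).
Qed.

Lemma sum_mono (f : nat -> R) n m : (forall i, 0 <= f i) -> (n <= m)%N ->
  \sum_(i < n) f i <= \sum_(i < m) f i.
Proof.
move=> f0 nm; rewrite (@sum_split f n m nm) lerDl.
by apply: sumr_ge0 => i _.
Qed.

Definition ee (j : nat) : R := (j.+1%:R)^-1.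

Lemma ee_gt0 j : 0 < ee j.
Proof. by rewrite /ee invr_gt0 ltr0n. Qed.

Lemma ee_anti i j : (j <= i)%N -> ee i <= ee j.
Proof.
move=> ji; rewrite /ee lef_pV2 ?posrE ?ltr0n // ler_nat ltnS //.
Qed.

Lemma ee_small (d : R) : 0 < d -> exists N, forall j, (N <= j)%N -> ee j < d.
Proof.
move=> d0; exists (Num.bound (d^-1)) => j Nj.
have h : d^-1 < (Num.bound (d^-1))%:R by apply: archi_boundP; rewrite invr_ge0 ltW.
rewrite /ee -(invrK d) ltf_pV2 ?posrE ?ltr0n ?invr_gt0 //.
apply: (lt_le_trans h); rewrite ler_nat; exact: leqW.
Qed.


Lemma ReD (p q : R[i]) : complex.Re (p + q) = complex.Re p + complex.Re q.
Proof. by case: p => a b; case: q => c d. Qed.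

Lemma ReB (p q : R[i]) : complex.Re (p - q) = complex.Re p - complex.Re q.
Proof. by case: p => a b; case: q => c d. Qed.

Lemma ImB (p q : R[i]) : complex.Im (p - q) = complex.Im p - complex.Im q.
Proof. by case: p => a b; case: q => c d. Qed.

Lemma ReJ (p : R[i]) : complex.Re (conjc p) = complex.Re p.
Proof. by case: p. Qed.

Lemma Re0 : complex.Re (0 : R[i]) = 0.
Proof. by []. Qed.

Lemma Re_sum (I : Type) (r : seq I) (P : pred I) (F : I -> R[i]) :
  complex.Re (\sum_(i <- r | P i) F i) = \sum_(i <- r | P i) complex.Re (F i).
Proof. exact: (big_morph _ ReD Re0). Qed.

Lemma rpB p q r : rp (p - q) r = rp p r - rp q r.
Proof. case: p => a b; case: q => c d; case: r => e f; rewrite /rp /=; ring. Qed.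

Lemma sqmB p q : sqm (p - q) = (complex.Re p - complex.Re q) ^+ 2 + (complex.Im p - complex.Im q) ^+ 2.
Proof. by rewrite /sqm ReB ImB. Qed.

Lemma rp_sum_bound (s : R) (p q : nat -> R[i]) m N : 0 < s ->
  2 * `|\sum_(m <= n < N) rp (p n) (q n)| <=
  s * \sum_(m <= n < N) sqm (p n) + (\sum_(m <= n < N) sqm (q n)) / s.
Proof.
move=> s0.
apply: (le_trans (y := 2 * \sum_(m <= n < N) `|rp (p n) (q n)|)).
  by rewrite ler_pM2l // ler_norm_sum.
rewrite mulr_sumr mulr_sumr mulr_suml -big_split /=.
by apply: ler_sum => n _; exact: rp_bound.
Qed.

Lemma cvg_sumN (g : nat -> nat -> R) (l : nat -> R) N :
  (forall n, (fun i => g i n) @ \oo --> l n) ->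
  (fun i => \sum_(n < N) g i n) @ \oo --> \sum_(n < N) l n.
Proof.
move=> H; elim: N => [|N IH].
  rewrite big_ord0 (_ : (fun i => _) = (fun=> 0)); first exact: cvg_cst.
  by apply: funext => i; rewrite big_ord0.
rewrite big_ord_recr /= (_ : (fun i => _) = (fun i => \sum_(n < N) g i n + g i N)); last first.
  by apply: funext => i; rewrite big_ord_recr.
exact: (cvgD IH (H N)).
Qed.

Lemma lim_le_b (f : nat -> R) l b N0 : f @ \oo --> l ->
  (forall i, (N0 <= i)%N -> f i <= b) -> l <= b.
Proof.
move=> fl Hb; rewrite -(cvg_lim (@norm_hausdorff _ R^o) fl).
apply: limr_le; first by apply/cvg_ex; exists l.
by exists N0 => // i; exact: Hb.
Qed.

End Basics.
Arguments ee {R} j.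
Arguments ee_gt0 {R} j.


Section Gen.
Variable R : realType.
Variable V : lmodType R[i].
Variable ip : V -> V -> R[i].
Hypothesis ipl : forall a x y z, ip (a *: x + y) z = a * ip x z + ip y z.
Hypothesis ips : forall x y, ip y x = conjc (ip x y).
Hypothesis ipp : forall x, 0 <= complex.Re (ip x x).
Variable w : nat -> V.
Variables M Ms : V -> V.
Hypothesis adj : forall x y, ip (M x) y = ip x (Ms y).
Variables A B : R.
Hypothesis A0 : 0 < A.
Hypothesis B0 : 0 < B.
Hypothesis fr : forall z, ((A * nsq ip (Ms z))%:E <= frame_sum ip z w)%E /\
                          (frame_sum ip z w <= (B * nsq ip z)%:E)%E.

Definition cc n z := ip z (w n).
Definition QN N z := \sum_(n < N) sqm (cc n z).
Definition Q z := sup (range (fun N => QN N z)).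

Lemma QN_ge0 N z : 0 <= QN N z.
Proof. by apply: sumr_ge0 => i _; exact: sqm_ge0. Qed.

Lemma QN_mono z : nondecreasing_seq (fun N => QN N z).
Proof. move=> n m nm; apply: (@sum_mono _ (fun i => sqm (cc i z))) => // i; exact: sqm_ge0. Qed.

Lemma QN_le_B N z : QN N z <= B * nsq ip z.
Proof.
rewrite -lee_fin; apply: le_trans _ (fr z).2.
apply: (@ser_ge _ (fun n => sqm (cc n z)) N) => n; exact: sqm_ge0.
Qed.

Lemma Q_has_sup z : has_sup (range (fun N => QN N z)).
Proof.
split; first by exists (QN 0 z), 0%N.
by exists (B * nsq ip z) => _ [N _ <-]; exact: QN_le_B.
Qed.

Lemma QN_le_Q N z : QN N z <= Q z.
Proof. by apply: sup_upper_bound; [exact: Q_has_sup | exists N]. Qed.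

Lemma Q_le_B z : Q z <= B * nsq ip z.
Proof.
apply: ge_sup; first by exists (QN 0 z), 0%N.
by move=> _ [N _ <-]; exact: QN_le_B.
Qed.

Lemma Q_ge0 z : 0 <= Q z.
Proof. exact: le_trans (QN_ge0 0 z) (QN_le_Q 0 z). Qed.

Lemma Q_ge_A z : A * nsq ip (Ms z) <= Q z.
Proof.
rewrite -lee_fin; apply: le_trans (fr z).1 _.
apply: (@ser_le _ (fun n => sqm (cc n z))) => [n|N]; first exact: sqm_ge0.
exact: QN_le_Q.
Qed.

Lemma QN_cvg z : (fun N => QN N z) @ \oo --> Q z.
Proof.
apply: nondecreasing_cvgn; first exact: QN_mono.
by case: (Q_has_sup z).
Qed.

Lemma cc_lin n a x y : cc n (a *: x + y) = a * cc n x + cc n y.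
Proof. exact: ipl. Qed.

Definition PN N z x := \sum_(n < N) rp (cc n z) (cc n x).

Lemma QN_lin N (t : R) z x :
  QN N ((t%:C)%C *: z + x) = t ^+ 2 * QN N z + 2 * t * PN N z x + QN N x.
Proof.
rewrite /QN /PN !mulr_sumr -!big_split /=.
by apply: eq_bigr => n _; rewrite cc_lin sqm_lin.
Qed.

Definition D z x := (Q ((1%:C)%C *: z + x) - Q z - Q x) / 2.

Lemma PN_cvg z x : (fun N => PN N z x) @ \oo --> D z x.
Proof.
have -> : (fun N => PN N z x) =
   (fun N => (QN N ((1%:C)%C *: z + x) - QN N z - QN N x) / 2).
  by apply: funext => N; rewrite QN_lin; field.
exact: (@cvgMr_tmp _ _ _ _ (fun N => QN N ((1%:C)%C *: z + x) - QN N z - QN N x) _ (2^-1)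
  (cvgB (cvgB (@QN_cvg _) (@QN_cvg z)) (@QN_cvg x))).
Qed.

Lemma Q_lin (t : R) z x :
  Q ((t%:C)%C *: z + x) = t ^+ 2 * Q z + 2 * t * D z x + Q x.
Proof.
have h2 : (fun N => QN N ((t%:C)%C *: z + x)) @ \oo --> t ^+ 2 * Q z + 2 * t * D z x + Q x.
  rewrite (_ : (fun N => QN N _) = (fun N => t ^+ 2 * QN N z + 2 * t * PN N z x + QN N x)); last first.
    by apply: funext => N; rewrite QN_lin.
  exact: (cvgD (cvgD (@cvgMl_tmp _ _ _ _ _ (t ^+ 2) _ (@QN_cvg z))
     (@cvgMl_tmp _ _ _ _ _ (2 * t) _ (@PN_cvg z x))) (@QN_cvg x)).
exact: (cvg_unique (@norm_hausdorff _ R^o) (@QN_cvg _) h2).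
Qed.


Lemma ip0 z : ip 0 z = 0.
Proof.
have h := ipl 1 0 0 z; rewrite scaler0 addr0 mul1r in h.
by have := congr1 (fun c => c - ip 0 z) h; rewrite subrr addrK => <-.
Qed.

Lemma ipB x y z : ip (x - y) z = ip x z - ip y z.
Proof.
have h := ipl (-1) y x z; rewrite scaleN1r mulN1r addrC in h.
by rewrite h addrC.
Qed.

Lemma ip_suml (a : nat -> R[i]) m v :
  ip (\sum_(n < m) a n *: w n) v = \sum_(n < m) a n * ip (w n) v.
Proof.
elim: m => [|m IH]; first by rewrite !big_ord0 ip0.
by rewrite !big_ord_recr /= addrC ipl IH addrC.
Qed.

Lemma Re_ip_sym x y : complex.Re (ip y x) = complex.Re (ip x y).
Proof. by rewrite ips ReJ. Qed.

Lemma ip_quad (t : R) x y :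
  complex.Re (ip ((t%:C)%C *: x + y) ((t%:C)%C *: x + y)) =
  t ^+ 2 * nsq ip x + 2 * t * complex.Re (ip x y) + nsq ip y.
Proof.
rewrite ipl ReD ReM_real (Re_ip_sym _ x) (Re_ip_sym _ y) ipl ipl !ReD !ReM_real /nsq.
rewrite (Re_ip_sym x y); ring.
Qed.

Lemma ip_amgm (s : R) x y : 0 < s ->
  2 * complex.Re (ip x y) <= s * nsq ip x + nsq ip y / s.
Proof.
move=> s0; have h := ipp (((- s)%:C)%C *: x + y).
rewrite ip_quad in h.
rewrite -(@ler_pM2l _ s) // mulrDr.
have -> : s * (nsq ip y / s) = nsq ip y by field; rewrite gt_eqF.
rewrite /nsq in h *; nra.
Qed.

Variable u : V.
Definition J z := Q z / 2 - complex.Re (ip z (M u)).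

Lemma J_lb z : - (nsq ip u / A / 2) <= J z.
Proof.
have h1 : complex.Re (ip z (M u)) = complex.Re (ip u (Ms z)) by rewrite Re_ip_sym adj.
have Ai : 0 < A^-1 by rewrite invr_gt0.
have h2 := ip_amgm u (Ms z) Ai.
have h3 := Q_ge_A z.
rewrite /J h1.
rewrite invrK (mulrC A^-1) in h2.
rewrite (mulrC A) in h3.
lra.
Qed.

Definition m0 := - sup (range (fun z => - J z)).

Lemma J_has_sup : has_sup (range (fun z => - J z)).
Proof.
split; first by exists (- J 0), 0.
exists ((nsq ip u / A) / 2) => _ [z _ <-].
by rewrite lerNl; exact: J_lb.
Qed.

Lemma J_ge_m z : m0 <= J z.
Proof.
rewrite /m0 lerNl; apply: sup_upper_bound; first exact: J_has_sup.
by exists z.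
Qed.

Lemma J_near_m e : 0 < e -> exists z, J z < m0 + e.
Proof.
move=> e0; have [_ [z _ <-] h] := sup_adherent e0 J_has_sup.
by exists z; rewrite /m0; lra.
Qed.

Lemma J_lin (t : R) z x :
  J ((t%:C)%C *: z + x) = J x + t * (D z x - complex.Re (ip z (M u))) + t ^+ 2 * Q z / 2.
Proof. by rewrite /J Q_lin ipl ReD ReM_real; field. Qed.

Definition wj j := proj1_sig (cid (J_near_m (ee_gt0 j))).

Lemma wj_spec j : J (wj j) < m0 + ee j.
Proof. exact: (proj2_sig (cid (J_near_m (ee_gt0 j)))). Qed.

Lemma wj_cauchy i j : Q (wj i - wj j) <= 4 * (ee i + ee j).
Proof.
set d := wj i - wj j.
have e1 : (1%:C)%C *: d + wj j = wj i by rewrite scale1r /d subrK.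
have h1 := J_lin 1 d (wj j); rewrite e1 in h1.
have h2 := J_lin (2^-1) d (wj j).
have h3 := J_ge_m ((2^-1 %:C)%C *: d + wj j).
have h4 := wj_spec i; have h5 := wj_spec j; have h6 := J_ge_m (wj j).
rewrite h2 in h3.
rewrite -> expr1n, mul1r in h1.
rewrite expr2 in h3.
lra.
Qed.

Lemma sqm_le_Q n z : sqm (cc n z) <= Q z.
Proof.
apply: le_trans (QN_le_Q n.+1 z).
by rewrite /QN big_ord_recr /= lerDr; apply: sumr_ge0 => i _; exact: sqm_ge0.
Qed.

Lemma coord_cauchy n i j : sqm (cc n (wj i) - cc n (wj j)) <= 4 * (ee i + ee j).
Proof. by rewrite /cc -ipB; exact: le_trans (sqm_le_Q n _) (wj_cauchy i j). Qed.

Lemma Re_cauchy n : cvgn (fun j => complex.Re (cc n (wj j))).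
Proof.
apply: real_cauchy2 => e e0.
have e8 : 0 < e / 8 by rewrite divr_gt0.
have [N HN] := ee_small e8.
exists N => i j Ni Nj.
have := coord_cauchy n i j; rewrite sqmB.
have := HN i Ni; have := HN j Nj.
have := sqr_ge0 (complex.Im (cc n (wj i)) - complex.Im (cc n (wj j))).
lra.
Qed.

Lemma Im_cauchy n : cvgn (fun j => complex.Im (cc n (wj j))).
Proof.
apply: real_cauchy2 => e e0.
have e8 : 0 < e / 8 by rewrite divr_gt0.
have [N HN] := ee_small e8.
exists N => i j Ni Nj.
have := coord_cauchy n i j; rewrite sqmB.
have := HN i Ni; have := HN j Nj.
have := sqr_ge0 (complex.Re (cc n (wj i)) - complex.Re (cc n (wj j))).
lra.
Qed.

Definition aa n : R[i] := (limn (fun j => complex.Re (cc n (wj j))) +i*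
                           limn (fun j => complex.Im (cc n (wj j))))%C.

Lemma Bj j N : \sum_(n < N) sqm (aa n - cc n (wj j)) <= 8 * ee j.
Proof.
apply: (@lim_le_b _ (fun i => \sum_(n < N) sqm (cc n (wj i) - cc n (wj j))) _ _ j).
  apply: (@cvg_sumN _ (fun i n => sqm (cc n (wj i) - cc n (wj j))) (fun n => sqm (aa n - cc n (wj j))) N) => n.
  rewrite sqmB (_ : (fun i => _) = (fun i =>
     (complex.Re (cc n (wj i)) - complex.Re (cc n (wj j))) *
     (complex.Re (cc n (wj i)) - complex.Re (cc n (wj j))) +
     (complex.Im (cc n (wj i)) - complex.Im (cc n (wj j))) *
     (complex.Im (cc n (wj i)) - complex.Im (cc n (wj j))))); last first.
    by apply: funext => i; rewrite sqmB !expr2.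
  rewrite !expr2.
  have hr : (fun i => complex.Re (cc n (wj i)) - complex.Re (cc n (wj j))) @ \oo -->
     (complex.Re (aa n) - complex.Re (cc n (wj j))).
    exact: (cvgB (@Re_cauchy n) (@cvg_cst _ (complex.Re (cc n (wj j))) nat \oo _)).
  have hi : (fun i => complex.Im (cc n (wj i)) - complex.Im (cc n (wj j))) @ \oo -->
     (complex.Im (aa n) - complex.Im (cc n (wj j))).
    exact: (cvgB (@Im_cauchy n) (@cvg_cst _ (complex.Im (cc n (wj j))) nat \oo _)).
  exact: (cvgD (cvgM hr hr) (cvgM hi hi)).
move=> i ji.
apply: (le_trans (y := Q (wj i - wj j))).
  apply: le_trans (QN_le_Q N _); rewrite /QN; apply: ler_sum => n _.
  by rewrite /cc ipB.
apply: le_trans (wj_cauchy i j) _.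
have := @ee_anti R i j ji; lra.
Qed.

Definition SA N := \sum_(n < N) sqm (aa n).

Lemma SA_bound N : SA N <= 16 * ee 0 + 2 * Q (wj 0).
Proof.
apply: (le_trans (y := \sum_(n < N) (2 * sqm (aa n - cc n (wj 0)) + 2 * sqm (cc n (wj 0))))).
  apply: ler_sum => n _.
  by rewrite -{1}(subrK (cc n (wj 0)) (aa n)); exact: sqm_add2.
rewrite big_split /= -!mulr_sumr.
have := Bj 0 N; have := QN_le_Q N (wj 0); rewrite /QN; lra.
Qed.

Lemma SA_has_sup : has_sup (range SA).
Proof.
split; first by exists (SA 0), 0%N.
by exists (16 * ee 0 + 2 * Q (wj 0)) => _ [N _ <-]; exact: SA_bound.
Qed.

Lemma aa_l2 : in_l2 aa.
Proof.
rewrite /in_l2.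
apply: (le_lt_trans (y := (16 * ee 0 + 2 * Q (wj 0))%:E)); last by rewrite ltry.
apply: (@ser_le _ (fun n => sqm (aa n))) => [n|N]; first exact: sqm_ge0.
exact: SA_bound.
Qed.

Lemma T_small d : 0 < d -> exists M0, forall m N, (M0 <= m)%N -> (m <= N)%N ->
  \sum_(m <= n < N) sqm (aa n) < d.
Proof.
move=> d0; have [_ [M0 _ <-] h] := sup_adherent d0 SA_has_sup.
exists M0 => m N M0m mN.
have e1 := @sum_split _ (fun n => sqm (aa n)) m N mN.
have h1 : SA N <= sup (range SA) by apply: sup_upper_bound; [exact: SA_has_sup | exists N].
have h2 : SA M0 <= SA m.
  by apply: (@sum_mono _ (fun n => sqm (aa n))) => // n; exact: sqm_ge0.
rewrite /SA in h1 h2 h e1; lra.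
Qed.

Lemma fo_bound z j s : 0 < s ->
  `|D z (wj j) - complex.Re (ip z (M u))| <= ee j / s + s * Q z / 2.
Proof.
move=> s0.
have h1 := J_lin s z (wj j); have h2 := J_lin (- s) z (wj j).
have h3 := J_ge_m ((s%:C)%C *: z + wj j); have h4 := J_ge_m (((- s)%:C)%C *: z + wj j).
have h5 := wj_spec j.
rewrite sqrrN in h2.
set al := D z (wj j) - complex.Re (ip z (M u)) in h1 h2 *.
have e1 : s * (ee j / s + s * Q z / 2) = ee j + s ^+ 2 * Q z / 2.
  by rewrite expr2; field; rewrite gt_eqF.
apply/ler_normlP; split; rewrite -(@ler_pM2l _ s) // ?mulrN e1; lra.
Qed.

Lemma Key2 z e : 0 < e -> exists N0, forall N, (N0 <= N)%N ->
  `|\sum_(n < N) rp (aa n) (cc n z) - complex.Re (ip z (M u))| < e.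
Proof.
move=> e0.
set q := Q z + 1.
have q0 : 0 < q by rewrite /q; have := Q_ge0 z; lra.
set s1 := 8 * q / e; set s2 := e / (8 * q).
have s10 : 0 < s1 by rewrite /s1 divr_gt0 // mulr_gt0.
have s20 : 0 < s2 by rewrite /s2 divr_gt0 // mulr_gt0.
have d10 : 0 < e / (64 * s1) by rewrite divr_gt0 // mulr_gt0.
have d20 : 0 < e * s2 / 8 by rewrite divr_gt0 // mulr_gt0.
have [j1 Hj1] := ee_small d10; have [j2 Hj2] := ee_small d20.
set j := maxn j1 j2.
have hj1 := Hj1 j (leq_maxl _ _); have hj2 := Hj2 j (leq_maxr _ _).
have [N0 _ HN0] := (cvgrPdist_lt _ _).1 (@PN_cvg z (wj j)) (e / 4) (divr_gt0 e0 (ltr0n _ 4)).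
exists N0 => N NN0.
have hPN := HN0 N NN0.
have hfo := fo_bound z j s20.
have E : \sum_(n < N) rp (aa n) (cc n z) =
         \sum_(n < N) rp (aa n - cc n (wj j)) (cc n z) + PN N z (wj j).
  rewrite /PN -big_split /=; apply: eq_bigr => n _.
  by rewrite rpB (rp_sym (cc n z)) subrK.
have hE1 := rp_sum_bound (fun n => aa n - cc n (wj j)) (fun n => cc n z) 0 N s10.
rewrite !big_mkord in hE1.
have hB := Bj j N.
have hQ : \sum_(n < N) sqm (cc n z) <= Q z by exact: QN_le_Q.
have f1 : s1 * \sum_(n < N) sqm (aa n - cc n (wj j)) <= e / 8.
  apply: (le_trans (y := s1 * (8 * (e / (64 * s1))))).
    rewrite ler_pM2l //; apply: le_trans hB _; rewrite ler_pM2l //; exact: ltW.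
  by rewrite le_eqVlt; apply/orP; left; apply/eqP; field; rewrite gt_eqF.
have f2 : (\sum_(n < N) sqm (cc n z)) / s1 <= e / 8.
  apply: (le_trans (y := q / s1)).
    by rewrite ler_pM2r ?invr_gt0 //; rewrite /q; lra.
  by rewrite le_eqVlt; apply/orP; left; apply/eqP; rewrite /s1; field;
     rewrite ?gt_eqF.
have f3 : ee j / s2 <= e / 8.
  apply: (le_trans (y := (e * s2 / 8) / s2)).
    by rewrite ler_pM2r ?invr_gt0 //; exact: ltW.
  by rewrite le_eqVlt; apply/orP; left; apply/eqP; field; rewrite gt_eqF.
have f4 : s2 * Q z / 2 <= e / 16.
  apply: (le_trans (y := s2 * q / 2)).
    rewrite ler_pM2r // ler_pM2l //; rewrite /q; lra.
  by rewrite le_eqVlt; apply/orP; left; apply/eqP; rewrite /s2; field;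
     rewrite ?gt_eqF.
rewrite E.
set x1 := \sum_(n < N) rp (aa n - cc n (wj j)) (cc n z) in hE1 *.
set x2 := PN N z (wj j) in hPN *.
set x3 := D z (wj j) in hPN hfo *.
set x4 := complex.Re (ip z (M u)) in hfo *.
have -> : x1 + x2 - x4 = x1 + (x2 - x3) + (x3 - x4) by rewrite /x1; lra.
apply: (le_lt_trans (ler_normD _ _)).
have := ler_normD x1 (x2 - x3).
rewrite distrC in hPN.
lra.
Qed.

Lemma synth_main : synth ip w aa (M u).
Proof.
move=> e e0.
have d0 : 0 < e / (4 * B) by rewrite divr_gt0 // mulr_gt0.
have [M0 HT] := T_small d0.
exists M0 => mm Hm.
set v := M u - \sum_(n < mm) aa n *: w n.
have e4 : 0 < e / 4 by rewrite divr_gt0.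
have [N1 HN1] := Key2 v e4.
set N := maxn mm N1.
have hN := HN1 N (leq_maxr _ _).
have mN : (mm <= N)%N := leq_maxl _ _.
have hv : nsq ip v = complex.Re (ip v (M u)) - \sum_(n < mm) rp (aa n) (cc n v).
  rewrite /nsq {1}/v ipB ReB Re_ip_sym ip_suml Re_sum.
  congr (_ - _); apply: eq_bigr => n _.
  by rewrite /cc (ips v (w n)) rp_ReJ.
have hs := @sum_split _ (fun n => rp (aa n) (cc n v)) mm N mN.
have hb := rp_sum_bound aa (fun n => cc n v) mm N B0.
have ht := HT mm N Hm mN.
have hq : \sum_(mm <= n < N) sqm (cc n v) <= B * nsq ip v.
  apply: le_trans (QN_le_B N v).
  rewrite /QN (@sum_split _ (fun n => sqm (cc n v)) mm N mN) lerDr.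
  by apply: sumr_ge0 => n _; exact: sqm_ge0.
have g1 : B * \sum_(mm <= n < N) sqm (aa n) <= e / 4.
  apply: (le_trans (y := B * (e / (4 * B)))); first by rewrite ler_pM2l // ltW.
  by rewrite le_eqVlt; apply/orP; left; apply/eqP; field; rewrite gt_eqF.
have g2 : (\sum_(mm <= n < N) sqm (cc n v)) / B <= nsq ip v.
  apply: (le_trans (y := (B * nsq ip v) / B)); first by rewrite ler_pM2r ?invr_gt0.
  by rewrite le_eqVlt; apply/orP; left; apply/eqP; field; rewrite gt_eqF.
rewrite -/v.
set X := \sum_(mm <= n < N) rp (aa n) (cc n v) in hs hb.
have hX := ler_norm X.
rewrite hs in hN.
move/ltr_normlP: hN => [hN1 hN2].
lra.
Qed.

Lemma gen_main : exists a, in_l2 a /\ synth ip w a (M u).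
Proof. exists aa; split; [exact: aa_l2 | exact: synth_main]. Qed.

End Gen.

Section Final.
Variable R : realType.
Variables V1 V2 : lmodType R[i].
Variable ip1 : V1 -> V1 -> R[i].
Variable ip2 : V2 -> V2 -> R[i].

Lemma fst_sum (a : nat -> R[i]) (x : nat -> V1) (y : nat -> V2) m :
  (\sum_(n < m) a n *: seq_sum x y n).1 = \sum_(n < m) a n *: x n.
Proof. by elim: m => [|m IH]; rewrite ?big_ord0 // !big_ord_recr /= IH. Qed.

Lemma snd_sum (a : nat -> R[i]) (x : nat -> V1) (y : nat -> V2) m :
  (\sum_(n < m) a n *: seq_sum x y n).2 = \sum_(n < m) a n *: y n.
Proof. by elim: m => [|m IH]; rewrite ?big_ord0 // !big_ord_recr /= IH. Qed.

Lemma split_synth (h1 : is_hilbert ip1) (h2 : is_hilbert ip2)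
  (x : nat -> V1) (y : nat -> V2) a p1 p2 :
  synth (ip_sum ip1 ip2) (seq_sum x y) a (p1, p2) ->
  synth ip1 x a p1 /\ synth ip2 y a p2.
Proof.
case: h1 => [[_ _ pos1 _] _]; case: h2 => [[_ _ pos2 _] _].
move=> H; split=> e e0; have [N HN] := H e e0; exists N => m Nm;
  have := HN m Nm; rewrite /nsq /ip_sum /= fst_sum snd_sum ReD.
- by have := pos2 (p2 - \sum_(n < m) a n *: y n); lra.
- by have := pos1 (p1 - \sum_(n < m) a n *: x n); lra.
Qed.

End Final.

Unset Implicit Arguments.
Local Close Scope classical_set_scope.

Theorem proposition2p12 (R : realType)
  (V1 V2 : lmodType R[i])
  (ip1 : V1 -> V1 -> R[i]) (ip2 : V2 -> V2 -> R[i])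
  (hH1 : is_hilbert ip1) (hH2 : is_hilbert ip2)
  (sH1 : separable ip1) (sH2 : separable ip2)
  (K : V1 -> V1) (L : V2 -> V2)
  (hK : bounded_op ip1 K) (hL : bounded_op ip2 L)
  (x : nat -> V1) (y : nat -> V2)
  (hx : is_Kframe ip1 K x) (hy : is_Kframe ip2 L y)
  (hxy : is_Kframe (ip_sum ip1 ip2) (op_sum K L) (seq_sum x y)) :
  (* R(K) ⊂ T1(N(T2)) *)
  (forall k : V1, (exists u, K u = k) ->
     exists a : nat -> R[i], in_l2 a /\ synth ip2 y a 0 /\ synth ip1 x a k) /\
  (* R(L) ⊂ T2(N(T1)) *)
  (forall l : V2, (exists u, L u = l) ->
     exists a : nat -> R[i], in_l2 a /\ synth ip1 x a 0 /\ synth ip2 y a l).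
Proof.
have hH1' := hH1; have hH2' := hH2.
case: hH1' => [[l1 s1 p1 _] _]; case: hH2' => [[l2 s2 p2 _] _].
have K0 : K 0 = 0.
  case: hK => lin _; have := lin 1 0 0; rewrite !scale1r addr0 => h.
  by have := congr1 (fun v => v - K 0) h; rewrite subrr addrK => <-.
have L0 : L 0 = 0.
  case: hL => lin _; have := lin 1 0 0; rewrite !scale1r addr0 => h.
  by have := congr1 (fun v => v - L 0) h; rewrite subrr addrK => <-.
have ipl : forall a (p q r : (V1 * V2)%type),
    ip_sum ip1 ip2 (a *: p + q) r = a * ip_sum ip1 ip2 p r + ip_sum ip1 ip2 q r.
  by move=> a p q r; rewrite /ip_sum /= l1 l2 mulrDr; ring.
have ips : forall p q : (V1 * V2)%type,
    ip_sum ip1 ip2 q p = conjc (ip_sum ip1 ip2 p q).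
  by move=> p q; rewrite /ip_sum s1 s2 rmorphD.
have ipp : forall p : (V1 * V2)%type, 0 <= complex.Re (ip_sum ip1 ip2 p p).
  by move=> p; rewrite /ip_sum ReD addr_ge0.
case: hxy => Ks [adj [A [B [A0 [B0 fr]]]]].
split.
- move=> k [u1 <-].
  have [a [la sa]] := gen_main ipl ips ipp adj A0 B0 fr (u1, 0).
  rewrite /op_sum /= L0 in sa.
  have [s1' s2'] := split_synth hH1 hH2 sa.
  by exists a.
- move=> l [u2 <-].
  have [a [la sa]] := gen_main ipl ips ipp adj A0 B0 fr (0, u2).
  rewrite /op_sum /= K0 in sa.
  have [s1' s2'] := split_synth hH1 hH2 sa.
  by exists a.
Qed.
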